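(* Every finite simple undirected graph is isomorphic to an induced subgraph of a finite simple undirected graph whose automorphism group acts primitively on its vertex set.
   Context: A permutation group is primitive if it is transitive and preserves no equivalence relation other than equality and the universal relation. *)

(* Defs.v *)
From mathcomp Require Import all_boot all_fingroup.
From mathcomp Require Import primitive_action.
Set Implicit Arguments. Unset Strict Implicit. Unset Printing Implicit Defensive.

Definition simple_graph (V : finType) (e : rel V) : Prop :=
  symmetric e /\ irreflexive e.

Definition graph_aut (W : finType) (h : rel W) : {set {perm W}} :=
  [set s : {perm W} | [forall x, forall y, h (s x) (s y) == h x y]].

Definition induced_embedding (V W : finType) (e : rel V) (h : rel W)
  (f : V -> W) : Prop :=
  injective f /\ forall x y, e x y = h (f x) (f y).

(* Main.v *)
From mathcomp Require Import all_boot zify.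
Set Implicit Arguments. Unset Strict Implicit. Unset Printing Implicit Defensive.


Local Open Scope nat_scope.
Ltac pos := repeat match goal with
  | |- context [2 ^ ?k] => is_var k;
     lazymatch goal with H : 0 < 2 ^ k |- _ => fail | _ =>
       have : 0 < 2 ^ k by rewrite expn_gt0 end; intro end.

Ltac solve_eq := first [reflexivity | (congr S; apply/eqP;
   rewrite -(eqn_exp2l _ _ (ltnSn 1)); apply/eqP; lia)].

Ltac leaf := rewrite ?expnS ?expn0 => E; pos; first [ lia | (left; split; solve_eq) | (right; split; solve_eq) ].

Lemma pow2_sidon a b c d : 2^a + 2^b = 2^c + 2^d ->
  (a = c /\ b = d) \/ (a = d /\ b = c).
Proof.
elim: a b c d => [|a IH] [|b] [|c] [|d]; try leaf.
rewrite !expnS -!mulnDr => /eqP; rewrite eqn_pmul2l // => /eqP /IH.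
by case=> [[-> ->]|[-> ->]]; [left|right].
Qed.

From mathcomp Require Import all_fingroup all_solvable all_algebra.
From mathcomp Require Import primitive_action.
Require Import Defs.
Import GRing.Theory.


Local Open Scope group_scope.
Lemma prime_prim (gT : finGroupType) (sT : finType) (G : {group gT})
  (to : {action gT &-> sT}) (x : sT) :
  [transitive G, on [set: sT] | to] -> prime #|sT| ->
  [primitive G, on [set: sT] | to].
Proof.
move=> trG pr.
rewrite (trans_prim_astab (in_setT x) trG).
apply/maximal_eqP; split; first exact: subsetIl.
move=> H sCH sHG.
have oG := card_orbit_stab to G x.
rewrite (atransP trG x (in_setT x)) cardsT in oG.
have LH := Lagrange sCH. have LG := Lagrange sHG.
have Cpos : 0 < #|'C_G[x | to]| by apply: cardG_gt0.
have : (#|H : 'C_G[x | to]| * #|G : H| = #|sT|)%N.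
  apply/eqP; rewrite -(eqn_pmul2l Cpos) mulnA LH LG -oG mulnC //.
move=> E.
have : #|G : H| %| #|sT| by rewrite -E dvdn_mull.
have pr' := pr; case/primeP: pr => _ /[apply] /orP[/eqP I1 | /eqP Ip].
  by right; apply: index1g.
left; apply/esym/(index1g sCH).
have p0 := prime_gt0 pr'.
move: E; rewrite Ip -{2}(mul1n #|sT|) => /eqP; rewrite eqn_pmul2r //.
by move/eqP.
Qed.


Local Open Scope nat_scope.
Lemma graph_aut_group (W : finType) (h : rel W) : group_set (graph_aut h).
Proof.
apply/group_setP; split.
  by rewrite inE; apply/forallP => x; apply/forallP => y; rewrite !perm1.
move=> s t; rewrite !inE => /forallP Hs /forallP Ht.
apply/forallP => x; apply/forallP => y; rewrite !permM.
move/forallP: (Ht (s x)) => /(_ (s y)) /eqP ->.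
by move/forallP: (Hs x) => /(_ y).
Qed.

Section M.
Variables (V : finType) (e : rel V) (m : nat).
Hypotheses (se : simple_graph e) (pm : prime m.+1) (big : 2 ^ #|V|.+1 < m.+1).

Definition f (v : V) : 'I_m.+1 := inord (2 ^ enum_rank v).

Lemma pow_lt (v : V) : 2 ^ enum_rank v < 2 ^ #|V|.
Proof. by rewrite ltn_exp2l. Qed.

Lemma valf (v : V) : nat_of_ord (f v) = 2 ^ enum_rank v.
Proof.
rewrite /f inordK //.
have := pow_lt v; have : 2 ^ #|V|.+1 = 2 * 2 ^ #|V| by rewrite expnS.
lia.
Qed.

Definition D (d : 'I_m.+1) := [exists u, exists v, e u v && (d == (f u - f v)%R)].
Definition hh : rel 'I_m.+1 := fun x y => (x != y) && D (x - y)%R.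

Lemma D_opp d : D d -> D (- d)%R.
Proof.
case/existsP => u /existsP [v /andP [euv /eqP ->]].
apply/existsP; exists v; apply/existsP; exists u.
rewrite opprB eqxx andbT. by case: se => sy _; rewrite sy.
Qed.

Lemma hh_simple : simple_graph hh.
Proof.
split; last by move=> x; rewrite /hh eqxx.
move=> x y; rewrite /hh eq_sym; case: (y != x) => //=.
apply/idP/idP => /D_opp; by rewrite opprB.
Qed.

Definition tr (k : 'I_m.+1) : {perm 'I_m.+1} := perm (addrI k).

Lemma tr_aut k : tr k \in graph_aut hh.
Proof.
rewrite inE; apply/forallP => x; apply/forallP => y; rewrite !permE /hh.
rewrite (inj_eq (addrI k)) opprD addrACA subrr add0r.
by [].
Qed.

Lemma f_inj : injective f.
Proof.
move=> u v /(congr1 (@nat_of_ord _)); rewrite !valf => /eqP.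
rewrite eqn_exp2l // => /eqP /ord_inj; exact: enum_rank_inj.
Qed.

Lemma f_emb x y : e x y = hh (f x) (f y).
Proof.
case: se => sy irr.
apply/idP/idP.
  move=> exy; rewrite /hh (inj_eq f_inj).
  have -> : (x != y) by apply: contraTneq exy => ->; rewrite irr.
  by apply/existsP; exists x; apply/existsP; exists y; rewrite exy eqxx.
case/andP => _ /existsP [u /existsP [v /andP [euv]]].
rewrite subr_eq => /eqP E.
have E2 : (f x + f v = f u + f y)%R by rewrite E addrAC subrK.
move: (congr1 (@nat_of_ord _) E2) => /=; rewrite !valf !modn_small; first last.
1,2: have := pow_lt u; have := pow_lt y; have := pow_lt x; have := pow_lt v.
1,2: have : 2 ^ #|V|.+1 = 2 * 2 ^ #|V| by rewrite expnS.
1,2: lia.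
case/pow2_sidon => [[/ord_inj/enum_rank_inj E1 /ord_inj/enum_rank_inj E3] | [/ord_inj/enum_rank_inj E1 /ord_inj/enum_rank_inj Evu]].
  by subst.
by rewrite Evu irr in euv.
Qed.

Lemma main_M : exists h : rel 'I_m.+1, [/\ simple_graph h,
  [primitive graph_aut h, on [set: 'I_m.+1] | 'P] & exists f, induced_embedding e h f].
Proof.
exists hh; split; [exact hh_simple | | by exists f; split; [exact f_inj| exact f_emb]].
pose G := Group (graph_aut_group hh).
change [primitive G, on [set: 'I_m.+1] | 'P].
apply: (@prime_prim _ _ G 'P 0%R); last by rewrite card_ord.
apply/imsetP; exists 0%R => //; apply/setP => y; rewrite inE; symmetry.
apply/orbitP; exists (tr y); first exact: tr_aut.
by rewrite -[LHS]/(perm (addrI y) 0%R) permE addr0.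
Qed.

End M.

Theorem proposition9 (V : finType) (e : rel V) :
  simple_graph e ->
  exists (W : finType) (h : rel W),
    [/\ simple_graph h,
        [primitive graph_aut h, on [set: W] | 'P]
      & exists f : V -> W, induced_embedding e h f].
Proof.
move=> se; have [p lt pr] := prime_above (2 ^ #|V|.+1).
case: p lt pr => [//|m] lt pr.
by exists 'I_m.+1; apply: main_M.
Qed.
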